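(* Fix $H\in(3/4,1)$, $\mu\in\mathbb{R}$, $\sigma>0$. For $\alpha>0$ let $Q^{\alpha}$ be the law on $\mathcal{C}[0,1]$ of $\alpha Z^H_t+B_t$, $t\in[0,1]$, where $B$ is a standard Brownian motion and $Z^H$ an independent fractional Brownian motion with Hurst parameter $H$, and let $Q_{\mu\alpha/\sigma}$ be the law on $\mathcal{C}[0,1]$ of $W_t-\frac{\mu\alpha}{\sigma}t$, $W$ a standard Brownian motion. For $n\ge1$ let $Y_n(\omega)=(\omega(\tfrac1n)-\omega(0),\dots,\omega(1)-\omega(\tfrac{n-1}n))^T$ and let $Q^{\alpha,n}$, $Q^n_{\mu\alpha/\sigma}$ be the restrictions of $Q^\alpha$, $Q_{\mu\alpha/\sigma}$ to $\sigma(Y_n)$. Then for every $n>1$, $$\lim_{\alpha\to\infty}H\big(Q^{\alpha,n}\,|\,Q^n_{\mu\alpha/\sigma}\big)=\infty.$$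
   Context: $H(Q_1|Q_2)$ denotes the relative entropy of $Q_1$ with respect to $Q_2$: the supremum over finite measurable partitions $\{F_j\}$ of $\sum_j Q_1(F_j)\ln(Q_1(F_j)/Q_2(F_j))$; when $Q_1\ll Q_2$ it equals $E_{Q_1}[\ln\frac{dQ_1}{dQ_2}]$. A fractional Brownian motion with Hurst parameter $H$ is a continuous centred Gaussian process with covariance $\frac12(t^{2H}+s^{2H}-|t-s|^{2H})$. *)

(* Defs.v *)
From HB Require Import structures.
From mathcomp Require Import all_boot all_order all_algebra.
From mathcomp Require Import all_classical all_reals all_analysis.
Set Implicit Arguments. Unset Strict Implicit. Unset Printing Implicit Defensive.
Import Order.TTheory GRing.Theory Num.Theory numFieldNormedType.Exports.
Local Open Scope classical_set_scope.
Local Open Scope ring_scope.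

Section defs.
Context {R : realType} {d : measure_display} {Omega : measurableType d}.

Definition centred_normal_law (v : R) : set R -> \bar R :=
  if v == 0 then \d_(0:R) else normal_prob 0 (Num.sqrt v).

Definition is_centred_normal (P : probability Omega R) (Y : Omega -> R) (v : R) :=
  measurable_fun setT Y /\
  forall A : set R, measurable A -> P (Y @^-1` A) = centred_normal_law v A.

Definition cont_centred_gaussian_process (P : probability Omega R)
    (X : R -> Omega -> R) (K : R -> R -> R) :=
  (forall w, {within `[(0:R), 1]%classic, continuous (fun t => X t w)}) /\
  forall (k : nat) (t : 'I_k -> R) (c : 'I_k -> R),
    (forall i, t i \in `[0, 1]) ->
    is_centred_normal P (fun w => \sum_(i < k) c i * X (t i) w)
      (\sum_(i < k) \sum_(j < k) c i * c j * K (t i) (t j)).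

Definition bm_cov (s t : R) : R := Num.min s t.
Definition fbm_cov (H : R) (s t : R) : R :=
  (s `^ (2 * H) + t `^ (2 * H) - `|t - s| `^ (2 * H)) / 2.

Definition is_standard_BM P X := cont_centred_gaussian_process P X bm_cov.
Definition is_fBM P (H : R) X := cont_centred_gaussian_process P X (fbm_cov H).

(* independence of the processes X and Y (on the generating pi-system of
   finite-dimensional cylinder sets of their natural sigma-algebras) *)
Definition indep_processes (P : probability Omega R) (X Y : R -> Omega -> R) :=
  forall (k : nat) (t : 'I_k -> R) (A C : 'I_k -> set R),
    (forall i, t i \in `[0, 1]) ->
    (forall i, measurable (A i)) -> (forall i, measurable (C i)) ->
    P ([set w | forall i, A i (X (t i) w)] `&` [set w | forall i, C i (Y (t i) w)])
    = (P [set w | forall i, A i (X (t i) w)] * P [set w | forall i, C i (Y (t i) w)])%E.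

End defs.

Definition incr_vec {R : realType} (n : nat) (f : R -> R) : 'I_n -> R :=
  fun i => f (i.+1%:R / n%:R) - f (i%:R / n%:R).

Definition boxes {R : realType} (n : nat) : set (set ('I_n -> R)) :=
  [set B | exists a b : 'I_n -> R, B = [set x | forall i, a i < x i <= b i]].
Definition borel_Rn {R : realType} (n : nat) : set (set ('I_n -> R)) :=
  <<s (@boxes R n) >>.

Definition kl_term {R : realType} (q1 q2 : R) : \bar R :=
  if q1 == 0 then 0%E else if q2 == 0 then +oo%E else (q1 * ln (q1 / q2))%:E.

Definition rel_entropy {T : Type} {R : realType} (G : set (set T))
    (Q1 Q2 : set T -> \bar R) : \bar R :=
  ereal_sup [set s | exists (m : nat) (F : 'I_m -> set T),
    (forall j, G (F j)) /\
    (forall j1 j2, j1 != j2 -> F j1 `&` F j2 = set0) /\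
    (\bigcup_(j in setT) F j = setT) /\
    s = (\sum_(j < m) kl_term (fine (Q1 (F j))) (fine (Q2 (F j))))%E].

(* Main.v *)
Require Import Defs.
From HB Require Import structures.
From mathcomp Require Import all_boot all_order all_algebra.
From mathcomp Require Import all_classical all_reals all_analysis.
From mathcomp Require Import ring lra.
Import Order.TTheory GRing.Theory Num.Theory numFieldNormedType.Exports.
Local Open Scope classical_set_scope.
Local Open Scope ring_scope.

Section S.
Context (R : realType) d (T : measurableType d).
Lemma mset_lt (f g : T -> R) : measurable_fun setT f -> measurable_fun setT g ->
  measurable [set w | f w < g w].
Proof.
move=> mf mg; have := measurable_realfun.measurable_fun_ltr mf mg measurableT (_ : measurable [set true]).
rewrite setTI; apply => //.
Qed.
Lemma mset_le (f g : T -> R) : measurable_fun setT f -> measurable_fun setT g ->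
  measurable [set w | f w <= g w].
Proof.
move=> mf mg; have := measurable_realfun.measurable_fun_ler mf mg measurableT (_ : measurable [set true]).
rewrite setTI; apply => //.
Qed.
Lemma mfun_norm (f : T -> R) : measurable_fun setT f -> measurable_fun setT (fun w => `|f w|).
Proof. move=> mf; exact: measurableT_comp. Qed.
Lemma small_seq (P : probability T R)
  (F : nat -> set T) : (forall k, measurable (F k)) ->
  (forall k, F k.+1 `<=` F k) -> P (\bigcap_k F k) = 0%E ->
  forall eps : R, 0 < eps -> exists k, (P (F k) <= eps%:E)%E.
Proof.
move=> mF decF P0 eps eps0.
have ni : nonincreasing_seq F.
  apply/nonincreasing_seqP => k; apply/subsetPset; exact: decF.
have fin0 : (P (F 0%N) < +oo)%E by rewrite ltey_eq fin_num_measure.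
have := @nonincreasing_cvg_mu _ _ R P F fin0 mF (bigcapT_measurable mF) ni.
set X := (X in _ --> X); have -> : X = 0%E by exact: P0. move=> /fine_cvg /cvgr_lt /(_ eps eps0) [N _ HN].
exists N; have := HN N (leqnn N) => /=.
move=> h; rewrite -(fineK (fin_num_measure _ _ (mF N))) lee_fin ltW //.
Qed.

Lemma tight (P : probability T R) (f : T -> R) : measurable_fun setT f ->
  forall eps : R, 0 < eps -> exists K : R, (P [set w | (K < `|f w|)%R] <= eps%:E)%E.
Proof.
move=> mf eps e0.
suff [k Hk] : exists k, (P [set w | (k%:R < `|f w|)%R] <= eps%:E)%E by exists k%:R.
apply: (@small_seq P (fun k => [set w | k%:R < `|f w|])); last exact: e0.
- move=> k; apply: mset_lt; [exact: measurable_cst | exact: mfun_norm].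
- move=> k w /=; apply: le_lt_trans; by rewrite ler_nat.
- rewrite (_ : \bigcap_k _ = set0) ?measure0 //; apply/seteqP; split => // w /= H.
  have := H (Num.truncn `|f w|).+1 I; have := truncnS_gt `|f w|.
  by move=> h1 h2; have := lt_trans h1 h2; rewrite ltxx.
Qed.

Lemma anti (P : probability T R) (f : T -> R) (c : R) : measurable_fun setT f ->
  P [set w | f w = c] = 0%E ->
  forall eps : R, 0 < eps -> exists delta : R, 0 < delta /\
    (P [set w | (`|f w - c| <= delta)%R] <= eps%:E)%E.
Proof.
move=> mf Pc eps e0.
suff [k Hk] : exists k, (P [set w | (`|f w - c| <= k.+1%:R^-1)%R] <= eps%:E)%E by exists k.+1%:R^-1.
apply: (@small_seq P (fun k => [set w | `|f w - c| <= k.+1%:R^-1])); last exact: e0.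
- move=> k; apply: mset_le; [apply: mfun_norm; exact: measurable_realfun.measurable_funB | exact: measurable_cst].
- move=> k w /= /le_trans; apply; rewrite lef_pV2 ?posrE // ler_nat //.
- rewrite (_ : \bigcap_k _ = [set w | f w = c]) //; apply/seteqP; split => w /= H.
  + apply/eqP; apply: contraT => ne.
    have dpos : 0 < `|f w - c| by rewrite normr_gt0 subr_eq0.
    have := H (Num.truncn (`|f w - c|^-1)) I; have := truncnS_gt (`|f w - c|^-1).
    move=> h1 h2; move: h1; rewrite invf_plt ?posrE ?ltr0n // => h1.
    by have := le_lt_trans h2 h1; rewrite ltxx.
  + by move=> k _ /=; rewrite H subrr normr0 invr_ge0.
Qed.
End S.

Section G.
Context (R : realType) d (T : measurableType d).

Lemma proc_meas (P : probability T R) X K : cont_centred_gaussian_process P X K ->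
  forall t, t \in `[(0:R), 1] -> measurable_fun setT (X t).
Proof.
move=> [_ h] t Ht; have [m _] := h 1%N (fun=> t) (fun=> 1) (fun=> Ht).
by move: m; congr measurable_fun; apply/funext => w; rewrite big_ord1 mul1r.
Qed.

Lemma fbm_incr_null (P : probability T R) (H : R) (Z : R -> T -> R) (a c : R) :
  0 < H -> is_fBM P H Z -> 0 < a <= 1 ->
  P [set w | Z a w - Z 0 w = c] = 0%E.
Proof.
move=> H0 [_ h] /andP[a0 a1].
pose t := fun i : 'I_2 => if i == ord0 then a else 0.
pose cc := fun i : 'I_2 => if i == ord0 then 1 else -1 : R.
have Ht : forall i, t i \in `[(0:R), 1].
  move=> i; rewrite /t; case: ifP => _; rewrite in_itv /= ?lexx ?ler01 //.
  by rewrite ltW.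
have [_ law] := h 2%N t cc Ht.
have E : (fun w => \sum_(i < 2) cc i * Z (t i) w) = (fun w => Z a w - Z 0 w).
  by apply/funext => w; rewrite !big_ord_recl big_ord0 /= /cc /t /= mul1r mulN1r addr0.
rewrite E in law.
have -> : [set w | Z a w - Z 0 w = c] = (fun w => Z a w - Z 0 w) @^-1` [set c] by [].
rewrite law //.
rewrite !big_ord_recl !big_ord0 /= /cc /t /= /fbm_cov.
have p0 : 2 * H != 0 by rewrite mulf_neq0 // gt_eqF.
rewrite !subrr !normr0 !powR0 // sub0r normrN !subr0 (gtr0_norm a0).
set v := (X in centred_normal_law X).
have -> : v = a `^ (2 * H) by rewrite /v; field.
rewrite /centred_normal_law gt_eqF ?powR_gt0 //.
have := @normal_prob_dominates R 0 (Num.sqrt (a `^ (2 * H))).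
move/null_content_dominatesP; apply => //.
exact: lebesgue_measure_set1.
Qed.
End G.

Section K.
Context (R : realType).

Lemma xlnx_ge (x : R) : 0 < x -> x - 1 <= x * ln x.
Proof.
move=> x0.
have xi : 0 < x^-1 by rewrite invr_gt0.
have h1 : -1 < x^-1 - 1 by lra.
have h := le_ln1Dx h1.
have e : 1 + (x^-1 - 1) = x^-1 by ring.
rewrite e lnV ?posrE // in h.
have : 1 - x^-1 <= ln x by lra.
move=> h2; have := ler_wpM2l (ltW x0) h2.
by rewrite mulrBr mulr1 mulfV ?gt_eqF.
Qed.

Lemma kl_small (p q : R) : 0 <= p -> 0 <= q <= 1 -> ((-1)%:E <= kl_term p q)%E.
Proof.
move=> p0 /andP[q0 q1]; rewrite /kl_term.
case: eqP => [_|/eqP pn0]; first by rewrite lee_fin lerN10.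
case: eqP => [_|/eqP qn0]; first by rewrite leey.
have pp : 0 < p by rewrite lt_def pn0.
have qp : 0 < q by rewrite lt_def qn0.
rewrite lee_fin; have h1 := xlnx_ge p pp.
have : p * ln p <= p * ln (p / q).
  apply: ler_wpM2l; first exact: ltW.
  rewrite ler_ln ?posrE ?divr_gt0 //.
  rewrite ler_pdivlMr //; have := ler_wpM2l (ltW pp) q1; lra.
lra.
Qed.

Lemma kl_big (M p q : R) : 1/2 <= p -> 0 <= q -> q <= expR (- (2 * (`|M| + 1))) / 2 ->
  ((M + 1)%:E <= kl_term p q)%E.
Proof.
move=> p12 q0 qE; rewrite /kl_term.
have pp : 0 < p by apply: lt_le_trans p12; lra.
rewrite gt_eqF //.
case: eqP => [_|/eqP qn0]; first by rewrite leey.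
have qp : 0 < q by rewrite lt_def qn0.
have E0 := @expR_gt0 R (- (2 * (`|M| + 1))).
have L : 2 * (`|M| + 1) <= ln (p / q).
  rewrite -[X in X <= _]expRK ler_ln ?posrE ?expR_gt0 ?divr_gt0 //.
  rewrite ler_pdivlMr //.
  have e : expR (2 * (`|M| + 1)) * expR (- (2 * (`|M| + 1))) = 1.
    by rewrite -expRD addrN expR0.
  have := ler_wpM2l (ltW (@expR_gt0 R (2 * (`|M| + 1)))) qE.
  rewrite mulrA e mul1r => h; lra.
rewrite lee_fin.
have Mn := ler_norm M.
have l0 : 0 <= ln (p / q) by apply: le_trans L; have := normr_ge0 M; lra.
have : (1/2) * ln (p / q) <= p * ln (p / q) by apply: ler_wpM2r.
lra.
Qed.
End K.

Section B.
Context (R : realType).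
Lemma kl_two (M p q p' q' : R) : 1/2 <= p -> 0 <= q -> q <= expR (- (2 * (`|M| + 1))) / 2 ->
  0 <= p' -> 0 <= q' <= 1 -> (M%:E <= kl_term p q + kl_term p' q')%E.
Proof.
move=> a b c e f.
apply: le_trans (leeD (@kl_big R M p q a b c) (@kl_small R p' q' e f)).
by rewrite -EFinD lee_fin; lra.
Qed.

Lemma borel_strip n (i0 : 'I_n) (lo hi : R) : @borel_Rn R n [set x | lo < x i0 <= hi].
Proof.
pose a k i := if i == i0 then lo else - (k.+1%:R) : R.
pose b k i := if i == i0 then hi else k.+1%:R : R.
have -> : [set x : 'I_n -> R | lo < x i0 <= hi] =
    \bigcup_k [set x | forall i, a k i < x i <= b k i].
  apply/seteqP; split => x /=.
  - move=> hx; exists (Num.truncn (\sum_j `|x j|)) => // i.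
    rewrite /a /b; case: eqP => [->//|_].
    have h1 : `|x i| <= \sum_j `|x j|.
      by rewrite (bigD1 i) //= lerDl sumr_ge0.
    have h2 := truncnS_gt (\sum_j `|x j|).
    have := le_lt_trans h1 h2; rewrite ltr_norml => /andP[u v].
    by rewrite u ltW.
  - by move=> [k _ /(_ i0)]; rewrite /a /b eqxx.
apply: sigma_algebra_bigcup => k; apply: sub_sigma_algebra.
by exists (a k), (b k).
Qed.
End B.

Section F.
Context (R : realType) d (T : measurableType d) (P : probability T R).
Lemma fine01 (A : set T) : measurable A -> 0 <= fine (P A) <= 1.
Proof.
move=> mA; apply/andP; split; rewrite -lee_fin fineK ?fin_num_measure //.
exact: probability_le1.
Qed.
Lemma fine_leE (A : set T) e : measurable A -> (P A <= e%:E)%E -> fine (P A) <= e.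
Proof. by move=> mA; rewrite -lee_fin fineK ?fin_num_measure. Qed.
Lemma fineC (A : set T) : measurable A -> fine (P (~` A)) = 1 - fine (P A).
Proof.
move=> mA; rewrite probability_setC //.
by rewrite -[P A](fineK (fin_num_measure P A mA)).
Qed.
Lemma mset_strip (g : T -> R) lo hi : measurable_fun setT g ->
  measurable [set w | lo < g w <= hi].
Proof.
move=> mg.
have -> : [set w | lo < g w <= hi] = [set w | lo < g w] `&` [set w | g w <= hi].
  by apply/seteqP; split => w /=; [move/andP | move=> [a b]; apply/andP].
apply: measurableI; [apply: mset_lt | apply: mset_le] => //; exact: measurable_cst.
Qed.
End F.

Arguments proc_meas {R d T P X K}.
Arguments tight {R d T P f}.
Arguments anti {R d T P f c}.

Lemma sup_ge (R : realType) (S : set (\bar R)) x y : S x -> (y <= x)%E -> (y <= ereal_sup S)%E.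
Proof. by move=> Sx /le_trans; apply; apply: ereal_sup_ubound. Qed.

Theorem lemma3p3 (R : realType) (H mu sigma : R)
  (HH : 3 / 4 < H < 1) (Hsigma : 0 < sigma)
  (d : measure_display) (Omega : measurableType d) (P : probability Omega R)
  (B Z : R -> Omega -> R)
  (HB : is_standard_BM P B) (HZ : is_fBM P H Z) (Hind : indep_processes P B Z)
  (d' : measure_display) (Omega' : measurableType d') (P' : probability Omega' R)
  (W : R -> Omega' -> R) (HW : is_standard_BM P' W)
  (n : nat) (Hn : (1 < n)%N) :
  forall M : R, exists A : R, forall alpha : R, 0 < alpha -> A < alpha ->
    (M%:E <= rel_entropy (@borel_Rn R n)
      (fun S => P [set w | S (@incr_vec R n (fun t => alpha * Z t w + B t w)%R)])
      (fun S => P' [set w | S (@incr_vec R n (fun t => W t w - mu * alpha / sigma * t)%R)]))%E.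
Proof.
move=> M.
have n0 : (0 < n)%N by apply: ltn_trans Hn.
pose i0 : 'I_n := Ordinal n0.
pose t1 : R := 1%:R / n%:R.
have nR : 0 < n%:R :> R by rewrite ltr0n.
have t1p : 0 < t1 by rewrite /t1 divr_gt0.
have t1le : t1 <= 1 by rewrite /t1 ler_pdivrMr // mul1r ler1n ltnW.
have Ht1 : t1 \in `[(0:R), 1] by rewrite in_itv /= ltW.
have Ht0 : (0:R) \in `[(0:R), 1] by rewrite in_itv /= lexx ler01.
have H0 : 0 < H by case/andP: HH => h _; apply: lt_trans h; lra.
pose U w := Z t1 w - Z 0 w.
pose V w := B t1 w - B 0 w.
pose DW w := W t1 w - W 0 w.
have mU : measurable_fun setT U.
  by apply: measurable_realfun.measurable_funB; apply: (proc_meas HZ).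
have mV : measurable_fun setT V.
  by apply: measurable_realfun.measurable_funB; apply: (proc_meas HB).
have mDW : measurable_fun setT DW.
  by apply: measurable_realfun.measurable_funB; apply: (proc_meas HW).
pose gam := mu / sigma * t1.
pose eps := expR (- (2 * (`|M| + 1))) / 2.
have eps0 : 0 < eps by rewrite divr_gt0 ?expR_gt0.
have [K2 HK2] := @tight _ _ _ P' _ mDW eps eps0.
have q0 : 0 < 1/4 :> R by lra.
have [K1 HK1] := @tight _ _ _ P _ mV _ q0.
have Unull : P [set w | U w = - gam] = 0%E.
  by apply: (@fbm_incr_null _ _ _ P H Z t1 (- gam) H0 HZ); rewrite t1p t1le.
have [del [del0 Hdel]] := anti mU Unull _ q0.
pose Tt := `|K2| + 1.
exists ((Tt + K1) / del).
move=> alpha a0 Aa.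
have ad : Tt + K1 < alpha * del by rewrite ltr_pdivrMr // in Aa.
pose lo := - Tt - alpha * gam.
pose hi := Tt - alpha * gam.
pose S := [set x : 'I_n -> R | lo < x i0 <= hi].
have E1 : forall w, incr_vec (fun t => alpha * Z t w + B t w) i0 = alpha * U w + V w.
  by move=> w; rewrite /incr_vec /= /U /V /t1 mul0r; ring.
have E2 : forall w, incr_vec (fun t => W t w - mu * alpha / sigma * t) i0 = DW w - alpha * gam.
  by move=> w; rewrite /incr_vec /= /DW /gam /t1 mul0r; ring.
pose S1 := [set w | S (incr_vec (fun t => alpha * Z t w + B t w))].
pose S2 := [set w | S (incr_vec (fun t => W t w - mu * alpha / sigma * t))].
have S1E : S1 = [set w | lo < alpha * U w + V w <= hi].
  by apply/seteqP; split => w; rewrite /S1 /S /= E1.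
have S2E : S2 = [set w | lo < DW w - alpha * gam <= hi].
  by apply/seteqP; split => w; rewrite /S2 /S /= E2.
have mS1 : measurable S1.
  rewrite S1E; apply: mset_strip; apply: measurable_realfun.measurable_funD => //.
  exact: (measurable_realfun.measurable_funM (measurable_cst alpha) mU).
have mS2 : measurable S2.
  rewrite S2E; apply: mset_strip; apply: measurable_realfun.measurable_funB => //.
have mA1 : measurable [set w | `|U w - - gam| <= del].
  apply: mset_le; [apply: mfun_norm; apply: measurable_realfun.measurable_funB => //|]; exact: measurable_cst.
have mA2 : measurable [set w | K1 < `|V w|].
  apply: mset_lt; [exact: measurable_cst|apply: mfun_norm => //].
have mA3 : measurable [set w | K2 < `|DW w|].
  apply: mset_lt; [exact: measurable_cst|apply: mfun_norm => //].
have HS1 : (P S1 <= (1/2)%:E)%E.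
  apply: (@le_trans _ _ (P ([set w | `|U w - - gam| <= del] `|` [set w | K1 < `|V w|]))).
    apply: le_measure; rewrite ?inE //; first exact: measurableU.
    move=> w; rewrite S1E /= => /andP[h1 h2].
    case: (leP (`|U w - - gam|) del) => hU; [by left|right].
    case: (ltP K1 `|V w|) => hV //; exfalso.
    rewrite opprK in hU; move: hV; rewrite ler_norml => /andP[v1 v2].
    move: h1 h2; rewrite /lo /hi => h1 h2.
    move: hU; rewrite ltr_normr => /orP[] hU.
      by move: hU; rewrite -(ltr_pM2l a0) mulrDr => hU; lra.
    by move: hU; rewrite -(ltr_pM2l a0) mulrN mulrDr => hU; lra.
  apply: le_trans (measureU2 _ _ _) _ => //.
  have -> : (1 / 2 : R) = 1 / 4 + 1 / 4 by field.
  by rewrite EFinD; apply: leeD.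
have HS2 : (P' (~` S2) <= eps%:E)%E.
  apply: le_trans HK2; apply: le_measure; rewrite ?inE //; first exact: measurableC.
  move=> w /= hn; case: (ltP K2 `|DW w|) => // hle; exfalso; apply: hn.
  rewrite S2E /= /lo /hi; move: hle; rewrite ler_norml => /andP[v1 v2].
  have := ler_norm K2; rewrite /Tt => hk.
  apply/andP; split; lra.
have SB : @borel_Rn R n S by apply: borel_strip.
pose F := fun j : 'I_2 => if val j == 0%N then ~` S else S.
rewrite /rel_entropy.
eapply sup_ge.
  exists 2%N, F; split.
    by move=> j; rewrite /F; case: ifP => _ //; exact: sigma_algebraC.
  split.
    move=> j1 j2 ne; rewrite /F.
    have j1l := ltn_ord j1; have j2l := ltn_ord j2.
    case: (val j1 =P 0%N) => h1; case: (val j2 =P 0%N) => h2.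
    - by move: ne; rewrite (_ : j1 = j2) ?eqxx //; apply/val_inj; rewrite /= h1 h2.
    - by rewrite setICl.
    - by rewrite setICr.
    - clear j1l j2l; move: ne h1 h2; case: j1 => [[|[|?]] ?] //=; case: j2 => [[|[|?]] ?] //=.
  split.
    apply/seteqP; split => // x _.
    case: (pselect (S x)) => Sx.
      by exists (Ordinal (isT : (1 < 2)%N)) => //=; rewrite /F /=.
    by exists ord0 => //; rewrite /F /=.
  reflexivity.
rewrite big_ord_recl big_ord1 /F /=.
have mS1c := measurableC mS1.
have mS2c := measurableC mS2.
apply: (@kl_two R M (fine (P (~` S1))) (fine (P' (~` S2))) (fine (P S1)) (fine (P' S2))).
- rewrite fineC //; have := @fine_leE _ _ _ P _ _ mS1 HS1; lra.
- by case/andP: (@fine01 _ _ _ P' _ mS2c).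
- exact: (@fine_leE _ _ _ P' _ _ mS2c HS2).
- by case/andP: (@fine01 _ _ _ P _ mS1).
- exact: fine01.
Qed.
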